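(* Let $p,q$ be positive integers with $p+q$ odd. For every $n\ge1$: (a) $\mathcal{J}^{p,q}_n$ is a subgroup of $\mathrm{Aut}(T_{n+1})$; (b) $\psi_n:\mathcal{J}^{p,q}_n\to\mathbb{Z}_{2^{\lfloor n/2\rfloor}}$ is a group homomorphism; (c) $\Delta_n:\mathcal{J}^{p,q}_n\to D_{2^{\lfloor n/2\rfloor+1}}$ is a group homomorphism.
   Context: Let $p,q$ be positive integers with $p+q$ odd. $\mathbb{Z}_{2^k}$ denotes the integers modulo $2^k$ ($\mathbb{Z}_1$ trivial); as $p+q$ is odd, division by $p+q$ and by $(p+q)^2$ is well defined in $\mathbb{Z}_{2^k}$, and integers are read modulo $2^k$. For $m\ge1$, $D_{2m}$ is the dihedral group of order $2m$, realized as pairs $(f,x)$ with $f\in\mathbb{Z}_2$, $x\in\mathbb{Z}_m$ and product $(f_1,x_1)(f_2,x_2)=(f_1+f_2,\,x_1+(-1)^{f_1}x_2)$. Define $\Phi:D_{2m}\to D_{2m}$ by $\Phi((f,x))=(f,\ \delta(f=1)(p+q)(p-q)-x)$, where $\delta(f=1)$ is $1$ if $f=1$ and $0$ otherwise. Groups $\mathrm{Aut}(T_k)$ (automorphisms of the rooted binary tree, equivalently iterated wreath products of $\mathbb{Z}_2$): $\mathrm{Aut}(T_1)$ is trivial; for $k\ge1$, $\mathrm{Aut}(T_{k+1})$ is the set of triples $g=(g_f,g_L,g_R)$ with $g_f\in\mathbb{Z}_2$, $g_L,g_R\in\mathrm{Aut}(T_k)$, with product $(f,A,B)(g,C,D)=(f+g,AC,BD)$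 if $f=0$ and $(f+g,AD,BC)$ if $f=1$. Subscripts are chained: $g_{LR}=(g_L)_R$, $g_{Lf}=(g_L)_f$, etc. Recursively define subsets $\mathcal{J}^{p,q}_n\subseteq\mathrm{Aut}(T_{n+1})$ and maps $\psi_n:\mathcal{J}^{p,q}_n\to\mathbb{Z}_{2^{\lfloor n/2\rfloor}}$, $\Delta_n:\mathcal{J}^{p,q}_n\to D_{2^{\lfloor n/2\rfloor+1}}$: $n=1$: $\mathcal{J}_1=\mathrm{Aut}(T_2)\cong\mathbb{Z}_2$, $\psi_1(g)=0$, $\Delta_1(g)=(g_f,0)$. $n=2$: $\mathcal{J}_2=\{g\in\mathrm{Aut}(T_3): g_L=g_R\}$, $\psi_2(g)=\delta(g_{Lf}=1)\in\mathbb{Z}_2$, $\Delta_2(g)=(g_f,\psi_2(g))$. $n\ge3$: $\mathcal{J}_n=\{g\in\mathrm{Aut}(T_{n+1}): g_L,g_R\in\mathcal{J}_{n-1},\ \Delta_{n-1}(g_L)=\Phi(\Delta_{n-1}(g_R))\}$; $\psi_n(g)=\dfrac{\psi_{n-1}(g_L)+\psi_{n-1}(g_R)}{p+q}$ for odd $n$, and $\psi_n(g)=\dfrac{2(\psi_{n-2}(g_{LL})+\psi_{n-2}(g_{RL}))-\delta(g_{Lf}=1)(p+q)(p-q)}{(p+q)^2}$ for even $n$ (here $2\psi_{n-2}(\cdot)$, with $\psi_{n-2}\in\mathbb{Z}_{2^{n/2-1}}$, is read in $\mathbb{Z}_{2^{n/2}}$); $\Delta_n(g)=(g_f,\ \psi_{n-1}(g_L)-\psi_{n-1}(g_R))$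 for odd $n$, and $\Delta_n(g)=(g_f,\ (p+q)\psi_n(g)-2\psi_{n-1}(g_R))$ for even $n$. *)

(* Defs.v *)
From mathcomp Require Import all_boot all_order all_algebra.
Set Implicit Arguments. Unset Strict Implicit. Unset Printing Implicit Defensive.
Import Order.TTheory GRing.Theory Num.Theory.
Local Open Scope ring_scope.

(* A n  represents Aut(T_{n+1}):  A 0 = Aut(T_1) trivial,
   A (k+1) = triples (g_f, g_L, g_R) with g_f : Z_2 (as bool). *)
Fixpoint A (n : nat) : Type :=
  match n with 0 => unit | S k => (bool * A k * A k)%type end.

Fixpoint aone (n : nat) : A n :=
  match n return A n with 0 => tt | S k => (false, aone k, aone k) end.

Fixpoint amul (n : nat) : A n -> A n -> A n :=
  match n return A n -> A n -> A n with
  | 0 => fun _ _ => tt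
  | S k => fun g h =>
      (g.1.1 (+) h.1.1,
       if g.1.1 then amul g.1.2 h.2 else amul g.1.2 h.1.2,
       if g.1.1 then amul g.2 h.1.2 else amul g.2 h.2)
  end.

Fixpoint ainv (n : nat) : A n -> A n :=
  match n return A n -> A n with
  | 0 => fun _ => tt
  | S k => fun g =>
      if g.1.1 then (true, ainv g.2, ainv g.1.2)
      else (false, ainv g.1.2, ainv g.2)
  end.

(* modulus 2^{floor(n/2)} and canonical representatives of Z_{2^{floor(n/2)}}
   as integers in [0, 2^{floor(n/2)}) *)
Definition md (n : nat) : int := 2%:Z ^+ n./2.
Definition zm (n : nat) (x : int) : int := (x %% md n)%Z.
(* a / b in Z_{2^{floor(n/2)}} (b odd): multiply by a Bezout inverse of b *)
Definition zdiv (n : nat) (a b : int) : int := zm n (a * (egcdz b (md n)).1).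

Section Defs.
Variables p q : int.

Fixpoint psi (n : nat) : A n -> int :=
  match n return A n -> int with
  | 0 => fun _ => 0                                  (* unused *)
  | S n1 =>
    (match n1 return (A n1 -> int) -> A (S n1) -> int with
     | 0 => fun _ _ => 0
     | S n2 => fun rec1 =>
       (match n2 return (A n2 -> int) -> (A (S n2) -> int) ->
                        A (S (S n2)) -> int with
        | 0 => fun _ _ g => if g.1.2.1.1 then 1 else 0
        | S m => fun rec2 rec1 g =>
          if odd (S (S (S m))) then
            zdiv (S (S (S m))) (rec1 g.1.2 + rec1 g.2) (p + q)
          else
            zdiv (S (S (S m)))
                 (2 * (rec2 g.1.2.1.2 + rec2 g.2.1.2)
                  - (if g.1.2.1.1 then (p + q) * (p - q) else 0))
                 ((p + q) ^+ 2)
        end) (@psi n2) rec1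
     end) (@psi n1)
  end.

(* elements of D_{2 m} with m = 2^{floor(n/2)}: pairs (f, x), x canonical rep *)
Definition dmul (n : nat) (a b : bool * int) : bool * int :=
  (a.1 (+) b.1, zm n (a.2 + (if a.1 then - b.2 else b.2))).

Definition Phi (n : nat) (a : bool * int) : bool * int :=
  (a.1, zm n ((if a.1 then (p + q) * (p - q) else 0) - a.2)).

Definition Delta (n : nat) : A n -> bool * int :=
  match n return A n -> bool * int with
  | 0 => fun _ => (false, 0)
  | 1 => fun g => (g.1.1, 0)
  | 2 => fun g => (g.1.1, @psi 2 g)
  | S ((S _) as k) => fun g =>
      if odd (S k) then (g.1.1, zm (S k) (@psi k g.1.2 - @psi k g.2))
      else (g.1.1, zm (S k) ((p + q) * @psi (S k) g - 2 * @psi k g.2))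
  end.

Fixpoint J (n : nat) : A n -> Prop :=
  match n return A n -> Prop with
  | 0 => fun _ => True                               (* unused *)
  | S n1 =>
    (match n1 return (A n1 -> Prop) -> A (S n1) -> Prop with
     | 0 => fun _ _ => True
     | S n2 =>
       match n2 return (A (S n2) -> Prop) -> A (S (S n2)) -> Prop with
       | 0 => fun _ g => g.1.2 = g.2
       | S m => fun rec1 g =>
          [/\ rec1 g.1.2, rec1 g.2 &
              @Delta (S (S m)) g.1.2 = Phi (S (S m)) (@Delta (S (S m)) g.2)]
       end
     end) (@J n1)
  end.

End Defs.

(* Main.v *)
Require Import Defs.
From mathcomp Require Import all_boot all_order all_algebra.
From mathcomp Require Import ring.
Import Order.TTheory GRing.Theory Num.Theory.
Set Implicit Arguments. Unset Strict Implicit. Unset Printing Implicit Defensive.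
Local Open Scope ring_scope.

Arguments zm : simpl never.
Arguments md : simpl never.
Definition dv (n : nat) (x : int) := (md n %| x)%Z.

Lemma md_gt0 n : 0 < md n.
Proof. by rewrite /md exprn_gt0. Qed.

Lemma mdE n : md n = Posz (2 ^ n./2)%N.
Proof. rewrite /md; elim: (n./2) => // k IH; by rewrite exprS IH expnS PoszM. Qed.

Lemma dz n x : dv n (x - zm n x).
Proof.
rewrite /dv /zm {1}(divz_eq x (md n)) addrK; exact: dvdz_mull (dvdzz _).
Qed.

Lemma zm_eq n x y : dv n (x - y) -> zm n x = zm n y.
Proof. by rewrite /dv -eqz_mod_dvd => /eqP. Qed.

Lemma zm_eqP n x y : zm n x = zm n y -> dv n (x - y).
Proof. by move=> H; rewrite /dv -eqz_mod_dvd; apply/eqP. Qed.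

Lemma zmK n x : zm n (zm n x) = zm n x.
Proof. exact: modz_mod. Qed.

Lemma dvD n x y : dv n x -> dv n y -> dv n (x + y).
Proof. exact: rpredD. Qed.
Lemma dvB n x y : dv n x -> dv n y -> dv n (x - y).
Proof. exact: rpredB. Qed.
Lemma dvN n x : dv n x -> dv n (- x).
Proof. by rewrite /dv rpredN. Qed.
Lemma dvM n k x : dv n x -> dv n (k * x).
Proof. exact: dvdz_mull. Qed.
Lemma dv0 n : dv n 0.
Proof. exact: dvdz0. Qed.

Ltac dvt := repeat match goal with
 | H : is_true (dv ?k ?x) |- is_true (dv ?k ?x) => exact H
 | |- is_true (dv _ (?x - zm _ ?x)) => apply: dz
 | |- is_true (dv _ 0) => apply: dv0
 | |- is_true (dv _ (_ - _)) => apply: dvB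
 | |- is_true (dv _ (_ + _)) => apply: dvD
 | |- is_true (dv _ (- _)) => apply: dvN
 | |- is_true (dv _ (_ * _)) => apply: dvM end.

Lemma canon_eq n x y : zm n x = x -> zm n y = y -> dv n (x - y) -> x = y.
Proof. by move=> <- <- /zm_eq; rewrite !zmK. Qed.

Lemma copz (s : int) n : odd `|s|%N -> coprimez s (md n).
Proof.
move=> Ho; rewrite coprimezE mdE /=; apply: coprimeXr; by rewrite coprimen2.
Qed.

Lemma zdiv_spec n a b : coprimez b (md n) -> dv n (b * zdiv n a b - a).
Proof.
rewrite /zdiv; case: egcdzP => u v Huv _ /eqP Hg.
have E : b * zm n (a * u) - a = - b * (a * u - zm n (a * u)) + a * (u * b + v * md n - 1) - a * v * md n by ring.
rewrite E Huv Hg subrr mulr0 addr0; apply: dvB; first by apply: dvM; apply: dz.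
rewrite /dv; apply: dvdz_mull; exact: dvdzz.
Qed.

Lemma dv_cancel n b x : coprimez b (md n) -> dv n (b * x) -> dv n x.
Proof. by move=> Hc; rewrite /dv Gauss_dvdzr // coprimez_sym. Qed.

Lemma halfS n : (n.+1)./2 = (odd n + n./2)%N.
Proof. by rewrite -uphalfE uphalf_half. Qed.

Lemma md_odd n : odd n.+1 -> md n.+1 = md n.
Proof. by rewrite /md halfS /= => /negbTE ->. Qed.

Lemma md_even n : ~~ odd n.+1 -> md n.+1 = 2 * md n.
Proof. by rewrite /md halfS /= negbK => ->; rewrite add1n exprS. Qed.

Lemma dv_odd n x : odd n.+1 -> dv n x -> dv n.+1 x.
Proof. by move=> H; rewrite /dv md_odd. Qed.
Lemma dv_odd' n x : odd n.+1 -> dv n.+1 x -> dv n x.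
Proof. by move=> H; rewrite /dv md_odd. Qed.
Lemma dv_even n x : ~~ odd n.+1 -> dv n x -> dv n.+1 (2 * x).
Proof. by move=> H; rewrite /dv md_even // dvdz_mul2l. Qed.
Lemma dv_even' n x : ~~ odd n.+1 -> dv n.+1 x -> dv n x.
Proof. move=> H; rewrite /dv md_even // => Hd; apply: dvdz_trans Hd; exact: dvdz_mull (dvdzz _). Qed.

Lemma pair_eq n (u v : bool * int) : u.1 = v.1 -> zm n u.2 = u.2 -> zm n v.2 = v.2 ->
  dv n (u.2 - v.2) -> u = v.
Proof. by case: u v => [f x] [g y] /= -> Hx Hy /(canon_eq Hx Hy) ->. Qed.

Lemma dmul_canon n u v : zm n (dmul n u v).2 = (dmul n u v).2.
Proof. exact: zmK. Qed.

Lemma D_idem n d : zm n d.2 = d.2 -> dmul n d d = d -> d = (false, 0).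
Proof.
case: d => f x /= Hx [Hf Hxx].
apply: (@pair_eq n) => //=.
- by rewrite -Hf addbb.
- by rewrite /zm mod0z.
have E : zm n (x + (if f then - x else x)) = zm n x by rewrite Hxx Hx.
case: f Hf {Hxx} E => // _ E.
by move/zm_eqP: E; rewrite (_ : x + x - x = x - 0) //; ring.
Qed.


Definition ph n (x : int) : 'Z_(2 ^ n./2) := x%:~R.

Lemma Zp0 N (x : int) : (1 < N)%N -> ((x%:~R : 'Z_N) == 0) = (N %| `|x|)%N.
Proof.
move=> HN; case: x => k.
  by rewrite -val_eqE /= val_Zp_nat.
rewrite NegzE intrN oppr_eq0 /= -val_eqE /= val_Zp_nat //.
Qed.

Lemma half_gt0' n : (1 < n)%N -> (1 < 2 ^ n./2)%N.
Proof.
move=> H; rewrite -{1}(expn0 2) ltn_exp2l //; by rewrite half_gt0.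
Qed.

Lemma dvP n x : (1 < n)%N -> dv n x <-> ph n x = 0.
Proof.
move=> Hn; rewrite /dv /ph; split.
  by rewrite dvdzE mdE /= => H; apply/eqP; rewrite Zp0 ?half_gt0'.
by move/eqP; rewrite Zp0 ?half_gt0' // dvdzE mdE.
Qed.

Lemma phE n x y : (1 < n)%N -> ph n x = ph n y <-> dv n (x - y).
Proof.
move=> Hn; rewrite dvP // /ph intrB; split; first by move=> ->; rewrite subrr.
by move/eqP; rewrite subr_eq0 => /eqP.
Qed.

Lemma md_dv n k x : (md n %| md k)%Z -> dv k x -> dv n x.
Proof. by move=> H1 H2; apply: dvdz_trans H2. Qed.

Lemma ph_zm n k x : (1 < n)%N -> (md n %| md k)%Z -> ph n (zm k x) = ph n x.
Proof. move=> Hn Hd; apply/phE => //; apply: (md_dv Hd); rewrite -opprB; apply: dvN; exact: dz. Qed.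

Lemma zm_ph n k x y : (1 < n)%N -> (md n %| md k)%Z -> zm k x = zm k y -> ph n x = ph n y.
Proof. by move=> Hn Hd H; apply/phE => //; apply: (md_dv Hd); apply: zm_eqP. Qed.

Lemma ph_zmeq n x y : (1 < n)%N -> ph n x = ph n y -> zm n x = zm n y.
Proof. by move=> Hn /phE H; apply: zm_eq; apply: H. Qed.

Lemma ph_zm' n x : (1 < n)%N -> ((zm n x)%:~R : 'Z_(2 ^ n./2)) = x%:~R.
Proof. move=> Hn; exact: (@ph_zm n n x Hn (dvdzz _)). Qed.

Ltac push := repeat (first [rewrite ph_zm' // | rewrite intrD | rewrite intrB | rewrite intrM | rewrite intrN]).

Section P.
Variables p q : int.
Lemma Phi_hom n u v : (1 < n)%N -> Phi p q n (dmul n u v) = dmul n (Phi p q n u) (Phi p q n v).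
Proof.
move=> Hn; case: u v => [f x] [g y]; rewrite /Phi /dmul /=; congr pair; apply: ph_zmeq => //.
rewrite /ph; case: f; case: g => /=; push; ring.
Qed.

Lemma Phi_canon n u : zm n (Phi p q n u).2 = (Phi p q n u).2.
Proof. exact: zmK. Qed.

Lemma Phi_invol n u : (1 < n)%N -> zm n u.2 = u.2 -> Phi p q n (Phi p q n u) = u.
Proof.
move=> Hn; case: u => f x /= Hx; rewrite /Phi /=; congr pair.
rewrite -{2}Hx; apply: ph_zmeq => //; rewrite /ph; push; ring.
Qed.

Lemma Phi_e n : Phi p q n (false, 0) = (false, 0).
Proof. by rewrite /Phi /= subr0 /zm mod0z. Qed.
End P.

Lemma D_rinv n u v w : (1 < n)%N -> zm n v.2 = v.2 -> zm n w.2 = w.2 ->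
  dmul n u v = (false, 0) -> dmul n u w = (false, 0) -> v = w.
Proof.
move=> Hn; case: u v w => [f x] [g y] [h z] /= Hy Hz [Hg Hgy] [Hh Hhz].
have Egh : g = h.
  by move: Hg Hh; clear; case: f; case: g; case: h.
subst h; congr pair; rewrite -Hy -Hz; apply: ph_zmeq => //.
have : ph n (zm n (x + (if f then - y else y))) = ph n (zm n (x + (if f then - z else z))).
  by rewrite Hgy Hhz.
clear Hg Hh Hgy Hhz; rewrite /ph; case: f; push => H.
  by apply: oppr_inj; apply: (addrI x%:~R).
by apply: (addrI x%:~R).
Qed.

Lemma amul1 n (g : A n) : amul (aone n) g = g.
Proof. elim: n g => [[]|n IH [[f a] b]] //=; by rewrite !IH. Qed.

Lemma amulV n (g : A n) : amul g (ainv g) = aone n.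
Proof. elim: n g => [[]|n IH [[f a] b]] //=; case: f => /=; by rewrite !IH. Qed.


Lemma phD n x y : ph n (x + y) = ph n x + ph n y. Proof. exact: intrD. Qed.
Lemma phB n x y : ph n (x - y) = ph n x - ph n y. Proof. exact: intrB. Qed.
Lemma phM n x y : ph n (x * y) = ph n x * ph n y. Proof. exact: intrM. Qed.
Lemma phN n x : ph n (- x) = - ph n x. Proof. exact: intrN. Qed.
Lemma ph0 n : ph n 0 = 0. Proof. by []. Qed.
Lemma ph1 n : ph n 1 = 1. Proof. by []. Qed.
Lemma phX n x : ph n (x ^+ 2) = ph n x ^+ 2. Proof. by rewrite !expr2 phM. Qed.
Lemma ph_zmn n x : (1 < n)%N -> ph n (zm n x) = ph n x.
Proof. exact: ph_zm'. Qed.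

Lemma ph_canon n x y : (1 < n)%N -> zm n x = x -> zm n y = y -> ph n x = ph n y -> x = y.
Proof. by move=> Hn Hx Hy /(phE _ _ Hn) H; apply: canon_eq Hx Hy H. Qed.

Lemma ph_md n : (1 < n)%N -> ph n (md n) = 0.
Proof. by move=> Hn; apply/dvP => //; apply: dvdzz. Qed.

Lemma unit_ex n b : (1 < n)%N -> coprimez b (md n) -> exists u, u * ph n b = 1.
Proof.
move=> Hn /eqP Hc; case: (egcdzP b (md n)) => u v Huv _.
have H : ph n (u * b + v * md n) = ph n 1 by rewrite Huv Hc.
by exists (ph n u); move: H; rewrite phD !phM ph_md // mulr0 addr0 ph1.
Qed.

Lemma zdiv_ph n a b u : (1 < n)%N -> coprimez b (md n) -> u * ph n b = 1 ->
  ph n (zdiv n a b) = u * ph n a.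
Proof.
move=> Hn Hc Hu; have := zdiv_spec a Hc; rewrite -(phE _ _ Hn) phM => H.
by rewrite -H mulrA Hu mul1r.
Qed.

Lemma odd_md k : odd k.+1 -> (md k.+1 %| md k)%Z.
Proof. by move=> H; rewrite md_odd // dvdzz. Qed.


Lemma zm_lift k x y : odd k.+1 -> zm k x = zm k y -> zm k.+1 x = zm k.+1 y.
Proof. by move=> H; rewrite /zm md_odd. Qed.

Lemma zdiv_hom k b e1 e2 e3 : coprimez b (md k) -> dv k (e3 - e1 - e2) ->
  zdiv k e3 b = zm k (zdiv k e1 b + zdiv k e2 b).
Proof.
move=> Hc H; apply: canon_eq; [exact: zmK | exact: zmK | ].
apply: (dv_cancel Hc).
have H1 := zdiv_spec e1 Hc; have H2 := zdiv_spec e2 Hc; have H3 := zdiv_spec e3 Hc.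
have H4 := dz k (zdiv k e1 b + zdiv k e2 b).
rewrite (_ : b * (zdiv k e3 b - zm k (zdiv k e1 b + zdiv k e2 b)) =
  (b * zdiv k e3 b - e3) - (b * zdiv k e1 b - e1) - (b * zdiv k e2 b - e2) + (e3 - e1 - e2)
  + b * (zdiv k e1 b + zdiv k e2 b - zm k (zdiv k e1 b + zdiv k e2 b))); last by ring.
dvt.
Qed.

Lemma even_key k y1 y2 x1 x2 x3 x4 (a c : bool) C : ~~ odd k.+1 ->
  dv k (y1 + y2 - x1 - x2 - x3 - x4 + (if a && c then C else 0)) ->
  dv k.+1 ((2 * (y1 + y2) - (if a (+) c then C else 0)) - (2 * (x1 + x2) - (if a then C else 0))
           - (2 * (x3 + x4) - (if c then C else 0))).
Proof.
move=> Ho H; have := dv_even Ho H; clear H.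
case: a; case: c => /= H'.
- by rewrite (_ : _ - _ = 2 * (y1 + y2 - x1 - x2 - x3 - x4 + C)) //; ring.
- by rewrite (_ : _ - _ = 2 * (y1 + y2 - x1 - x2 - x3 - x4 + 0)) //; ring.
- by rewrite (_ : _ - _ = 2 * (y1 + y2 - x1 - x2 - x3 - x4 + 0)) //; ring.
- by rewrite (_ : _ - _ = 2 * (y1 + y2 - x1 - x2 - x3 - x4 + 0)) //; ring.
Qed.

Lemma Tkey k (C : int) (fa fd : bool) y1 y2 aL bL cL cR dL dR :
  dv k (y1 + y2 - aL - bL - (if fa then cR + dR else cL + dL)) ->
  dv k (cL - cR + (dL - dR) - (if fd then C else 0)) ->
  dv k (y1 + y2 - aL - bL - cL - dL + (if fa && fd then C else 0)).
Proof.
case: fa => /= Hy HJ.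
  rewrite (_ : _ + _ = (y1 + y2 - aL - bL - (cR + dR)) - (cL - cR + (dL - dR) - (if fd then C else 0))).
    dvt.
  by clear HJ; case: fd; ring.
by rewrite (_ : _ + _ = (y1 + y2 - aL - bL - (cL + dL))); last by ring.
Qed.

Lemma F3key k (S C : int) (fc : bool) cL cR dL dR z4 z3c z3d :
  ~~ odd k.+1 -> coprimez S (md k) ->
  dv k.+1 (S ^+ 2 * z4 - (2 * (cL + dL) - (if fc then C else 0))) ->
  dv k (S * z3c - (cL + cR)) -> dv k (S * z3d - (dL + dR)) ->
  dv k (cL - cR + (dL - dR) - (if fc then C else 0)) ->
  dv k (S * z4 - z3c - z3d).
Proof.
move=> Ho Hc H1 H2 H3 H4; have H1' := dv_even' Ho H1.
apply: (dv_cancel Hc).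
rewrite (_ : _ * _ = (S ^+ 2 * z4 - (2 * (cL + dL) - (if fc then C else 0))) - (S * z3c - (cL + cR))
   - (S * z3d - (dL + dR)) + (cL - cR + (dL - dR) - (if fc then C else 0))); last by ring.
dvt.
Qed.

Lemma DEkey k (S : int) (f : bool) pg ph0 pgh b c d qY :
  ~~ odd k.+1 -> dv k (S * ph0 - c - d) -> zm k qY = zm k (b + (if f then c else d)) ->
  pgh = zm k.+1 (pg + ph0) ->
  zm k.+1 (S * pgh - 2 * qY) = zm k.+1 (zm k.+1 (S * pg - 2 * b) +
     (if f then - zm k.+1 (S * ph0 - 2 * d) else zm k.+1 (S * ph0 - 2 * d))).
Proof.
move=> Ho H3 /zm_eqP HY ->; apply: zm_eq.
have HY' := dv_even Ho HY; have H3' := dv_even Ho H3.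
have E1 := dz k.+1 (pg + ph0); have E2 := dz k.+1 (S * pg - 2 * b); have E3 := dz k.+1 (S * ph0 - 2 * d).
case: f HY HY' => HY HY'.
  rewrite (_ : _ - _ = - S * (pg + ph0 - zm k.+1 (pg + ph0)) - 2 * (qY - (b + c)) + 2 * (S * ph0 - c - d)
     + (S * pg - 2 * b - zm k.+1 (S * pg - 2 * b)) - (S * ph0 - 2 * d - zm k.+1 (S * ph0 - 2 * d))); last by ring.
  dvt.
rewrite (_ : _ - _ = - S * (pg + ph0 - zm k.+1 (pg + ph0)) - 2 * (qY - (b + d))
   + (S * pg - 2 * b - zm k.+1 (S * pg - 2 * b)) + (S * ph0 - 2 * d - zm k.+1 (S * ph0 - 2 * d))); last by ring.
dvt.
Qed.


Lemma jc_key k a b d : dv k (a - (d - zm k b)) -> dv k (a + b - d).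
Proof. move=> H; rewrite (_ : a + b - d = (a - (d - zm k b)) + (b - zm k b)); [dvt | ring]. Qed.

Lemma hy_key k y1 y2 a b u v w : u + v = w -> dv k (y1 - (a + u)) -> dv k (y2 - (b + v)) ->
  dv k (y1 + y2 - a - b - w).
Proof. move=> <- H1 H2; rewrite (_ : _ - _ = (y1 - (a + u)) + (y2 - (b + v))); [dvt | ring]. Qed.

Section Main.
Variables p q : int.
Hypothesis Hs : odd (absz (p + q)).

Definition Pn n := [/\ J p q (aone n),
   (forall g h : A n, J p q g -> J p q h -> J p q (amul g h)),
   (forall g : A n, J p q g -> J p q (ainv g)),
   (forall g h : A n, J p q g -> J p q h -> psi p q (amul g h) = zm n (psi p q g + psi p q h)) &
   (forall g h : A n, J p q g -> J p q h -> Delta p q (amul g h) = dmul n (Delta p q g) (Delta p q h))].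

Lemma JE m f (a b : A m.+2) : J p q ((f, a, b) : A m.+3) <-> [/\ J p q a, J p q b &
              Delta p q a = Phi p q m.+2 (Delta p q b)].
Proof. by []. Qed.

Lemma amulE k f f' (a b c d : A k) : amul ((f, a, b) : A k.+1) (f', c, d) =
  (f (+) f', if f then amul a d else amul a c, if f then amul b c else amul b d).
Proof. by []. Qed.

Lemma ainvE k f (a b : A k) : ainv ((f, a, b) : A k.+1) =
  if f then (true, ainv b, ainv a) else (false, ainv a, ainv b).
Proof. by []. Qed.

Lemma psiE m f fa fb (aL aR bL bR : A m.+1) :
  psi p q ((f, (fa, aL, aR), (fb, bL, bR)) : A m.+3) =
  if odd m.+3 then zdiv m.+3 (psi p q ((fa, aL, aR) : A m.+2) + psi p q ((fb, bL, bR) : A m.+2)) (p + q)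
  else zdiv m.+3 (2 * (psi p q aL + psi p q bL) - (if fa then (p + q) * (p - q) else 0)) ((p + q) ^+ 2).
Proof. by []. Qed.

Lemma psiE_odd m f (a b : A m.+2) : odd m.+3 ->
  psi p q ((f, a, b) : A m.+3) = zdiv m.+3 (psi p q a + psi p q b) (p + q).
Proof. by move: a b => [[fa aL] aR] [[fb bL] bR] H; rewrite psiE H. Qed.

Lemma psiE_even m f fa fb (aL aR bL bR : A m.+1) : ~~ odd m.+3 ->
  psi p q ((f, (fa, aL, aR), (fb, bL, bR)) : A m.+3) =
  zdiv m.+3 (2 * (psi p q aL + psi p q bL) - (if fa then (p + q) * (p - q) else 0)) ((p + q) ^+ 2).
Proof. by move=> /negbTE H; rewrite psiE H. Qed.

Lemma DeltaE m f (a b : A m.+2) :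
  Delta p q ((f, a, b) : A m.+3) = if odd m.+3 then (f, zm m.+3 (psi p q a - psi p q b))
  else (f, zm m.+3 ((p + q) * psi p q ((f, a, b) : A m.+3) - 2 * psi p q b)).
Proof. by []. Qed.

Lemma DeltaE_odd m f (a b : A m.+2) : odd m.+3 ->
  Delta p q ((f, a, b) : A m.+3) = (f, zm m.+3 (psi p q a - psi p q b)).
Proof. by move=> H; rewrite DeltaE H. Qed.

Lemma DeltaE_even m f (a b : A m.+2) : ~~ odd m.+3 ->
  Delta p q ((f, a, b) : A m.+3) = (f, zm m.+3 ((p + q) * psi p q ((f, a, b) : A m.+3) - 2 * psi p q b)).
Proof. by move=> /negbTE H; rewrite DeltaE H. Qed.

Lemma psi_canon n (g : A n) : (0 < n)%N -> zm n (psi p q g) = psi p q g.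
Proof.
case: n g => [|[|[|m]]] g // _.
- move: g => [[f [[a u] v]] w]; case: a => /=; rewrite /zm /md expr1 ?mod0z //.
- move: g => [[f [[fa aL] aR]] [[fb bL] bR]].
  case: (boolP (odd m.+3)) => H; [rewrite psiE_odd // | rewrite psiE_even //]; exact: zmK.
Qed.

Lemma Delta_canon n (g : A n) : (0 < n)%N -> zm n (Delta p q g).2 = (Delta p q g).2.
Proof.
case: n g => [|[|[|m]]] g // _.
- exact: (@psi_canon 2).
- move: g => [[f a] b]; rewrite DeltaE; case: ifP => _; exact: zmK.
Qed.

Lemma Delta_one k : (1 < k)%N -> Pn k -> Delta p q (aone k) = (false, 0).
Proof.
move=> Hk [J1 _ _ _ HD]; apply: (@D_idem k); first by apply: Delta_canon; apply: ltnW.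
by rewrite -HD // amul1.
Qed.

Lemma Delta_inv k (g : A k) : (1 < k)%N -> Pn k -> J p q g ->
  dmul k (Delta p q g) (Delta p q (ainv g)) = (false, 0).
Proof.
move=> Hk HP Jg; have [J1 _ Ji _ HD] := HP.
by have := HD g (ainv g) Jg (Ji g Jg); rewrite amulV (Delta_one Hk HP) => ->.
Qed.

Lemma stepJ m : Pn m.+2 -> [/\ J p q (aone m.+3),
   (forall g h : A m.+3, J p q g -> J p q h -> J p q (amul g h)) &
   (forall g : A m.+3, J p q g -> J p q (ainv g))].
Proof.
move=> HP; have [J1 Jm Ji _ HD] := HP.
have Hk : (1 < m.+2)%N by [].
have canon := fun g : A m.+2 => @Delta_canon m.+2 g isT.
split.
- by apply/JE; split => //; rewrite Delta_one // Phi_e.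
- move=> [[f a] b] [[f' c] d] /JE [Ja Jb Eab] /JE [Jc Jd Ecd].
  rewrite amulE; apply/JE; case: f; (split; [exact: Jm | exact: Jm | ]).
  + rewrite (HD _ _ Ja Jd) (HD _ _ Jb Jc) Eab Phi_hom //; congr dmul.
    by rewrite Ecd (Phi_invol _ _ Hk (canon d)).
  + by rewrite (HD _ _ Ja Jc) (HD _ _ Jb Jd) Eab Ecd Phi_hom.
- move=> [[f a] b] /JE [Ja Jb Eab]; rewrite ainvE; case: f; apply/JE; (split; [exact: Ji | exact: Ji | ]).
  + have Eba : Delta p q (b : A m.+2) = Phi p q m.+2 (Delta p q (a : A m.+2)) by rewrite Eab (Phi_invol _ _ Hk (canon b)).
    apply: (@D_rinv m.+2 (Delta p q (b : A m.+2))).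
    * done.
    * exact: canon.
    * exact: Phi_canon.
    * exact: Delta_inv.
    * by rewrite Eba -Phi_hom // Delta_inv // Phi_e.
  + apply: (@D_rinv m.+2 (Delta p q (a : A m.+2))).
    * done.
    * exact: canon.
    * exact: Phi_canon.
    * exact: Delta_inv.
    * by rewrite Eab -Phi_hom // Delta_inv // Phi_e.
Qed.

Ltac phs tac := repeat (first [tac | rewrite ph_zmn // | rewrite phD | rewrite phB | rewrite phN | rewrite phM | rewrite phX | rewrite ph0]).

Lemma step_odd m : odd m.+3 -> Pn m.+2 -> Pn m.+3.
Proof.
move=> Ho HP; have [J1 Jm Ji Hpsi HD] := HP.
have [J1' Jm' Ji'] := stepJ HP.
have Hn : (1 < m.+3)%N by [].
have Hmd := odd_md Ho.
have [u Hu] := unit_ex Hn (copz m.+3 Hs).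
have Zd := fun a => zdiv_ph a Hn (copz m.+3 Hs) Hu.
have Hh : forall x y : A m.+2, J p q x -> J p q y ->
    ph m.+3 (psi p q (amul x y)) = ph m.+3 (psi p q x) + ph m.+3 (psi p q y).
  move=> x y Jx Jy; rewrite -phD; apply: (zm_ph Hn Hmd); by rewrite Hpsi // zmK.
split => //.
- move=> [[f a] b] [[f' c] d] /JE [Ja Jb _] /JE [Jc Jd _].
  rewrite amulE !psiE_odd //.
  apply: (ph_canon Hn); [exact: zmK | exact: zmK | ].
  phs ltac:(rewrite Zd); case: f; rewrite !Hh //; ring.
- move=> [[f a] b] [[f' c] d] /JE [Ja Jb _] /JE [Jc Jd _].
  rewrite amulE !DeltaE_odd // /dmul /=; congr pair; apply: (ph_zmeq Hn).
  case: f; rewrite ?(ph_zmn, phD, phB, phN, Hh) //; ring.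
Qed.

Lemma dmulE n f x f' y : dmul n (f, x) (f', y) = (f (+) f', zm n (x + if f then - y else y)).
Proof. by []. Qed.

Lemma Jcond m (fa fb : bool) (aL aR bL bR : A m.+2) : odd m.+3 ->
  Delta p q ((fa, aL, aR) : A m.+3) = Phi p q m.+3 (Delta p q ((fb, bL, bR) : A m.+3)) ->
  fa = fb /\ dv m.+3 (psi p q aL - psi p q aR + (psi p q bL - psi p q bR) - (if fb then (p + q) * (p - q) else 0)).
Proof.
move=> Ho; rewrite !DeltaE_odd // /Phi /= => -[-> H]; split => //.
exact: jc_key (zm_eqP H).
Qed.

Lemma F3 m f fc fd (cL cR dL dR : A m.+2) : ~~ odd m.+4 ->
  J p q ((f, (fc, cL, cR), (fd, dL, dR)) : A m.+4) ->
  dv m.+3 ((p + q) * psi p q ((f, (fc, cL, cR), (fd, dL, dR)) : A m.+4)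
           - psi p q ((fc, cL, cR) : A m.+3) - psi p q ((fd, dL, dR) : A m.+3)).
Proof.
move=> He /JE [Jc Jd Ecd].
have Ho : odd m.+3 by move: He; rewrite /= negbK.
have [Ef Hcd] := Jcond Ho Ecd; subst fc.
rewrite psiE_even // !psiE_odd //.
have Hc := copz m.+3 Hs.
apply: (F3key He Hc _ (zdiv_spec _ Hc) (zdiv_spec _ Hc) Hcd).
apply: zdiv_spec; apply: coprimezXl; exact: copz.
Qed.

Lemma step_even m : ~~ odd m.+4 -> Pn m.+2 -> Pn m.+3 -> Pn m.+4.
Proof.
move=> He HP2 HP3.
have Ho : odd m.+3 by move: He; rewrite /= negbK.
have [_ _ _ Hpsi2 _] := HP2.
have [_ _ _ Hpsi3 _] := HP3.
have [J1' Jm' Ji'] := stepJ HP3.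
have H2 : forall x y : A m.+2, J p q x -> J p q y ->
    zm m.+3 (psi p q (amul x y)) = zm m.+3 (psi p q x + psi p q y).
  move=> x y Jx Jy; apply: zm_lift => //; by rewrite Hpsi2 // zmK.
have Hps : forall g h : A m.+4, J p q g -> J p q h -> psi p q (amul g h) = zm m.+4 (psi p q g + psi p q h).
  move=> [[f [[fa aL] aR]] [[fb bL] bR]] [[f' [[fc cL] cR]] [[fd dL] dR]] /JE [Ja Jb Eab] /JE [Jc Jd Ecd].
  move: Ja Jb Jc Jd => /JE [JaL JaR _] /JE [JbL JbR _] /JE [JcL JcR _] /JE [JdL JdR _].
  have [Efab _] := Jcond Ho Eab.
  have [Efcd Hcd] := Jcond Ho Ecd.
  subst fa fc; clear Eab Ecd.
  rewrite amulE; case: f; rewrite amulE !psiE_even //;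
    (apply: zdiv_hom; first by apply: coprimezXl; apply: copz);
    apply: (even_key He); apply: (Tkey _ Hcd); case: fb.
  - exact: (hy_key (addrC _ _) (zm_eqP (H2 _ _ JaL JdR)) (zm_eqP (H2 _ _ JbL JcR))).
  - exact: (hy_key (addrC _ _) (zm_eqP (H2 _ _ JaL JdL)) (zm_eqP (H2 _ _ JbL JcL))).
  - exact: (hy_key (erefl _) (zm_eqP (H2 _ _ JaL JcR)) (zm_eqP (H2 _ _ JbL JdR))).
  - exact: (hy_key (erefl _) (zm_eqP (H2 _ _ JaL JcL)) (zm_eqP (H2 _ _ JbL JdL))).
split => //.
move=> g h Jg Jh; have Hgh := Hps g h Jg Jh.
move: g h Jg Jh Hgh => [[f a] b] [[f' [[fc cL] cR]] [[fd dL] dR]] /JE [Ja Jb _] Jh.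
have F := F3 He Jh.
move: Jh => /JE [Jc Jd _].
rewrite amulE => Hgh; rewrite !DeltaE_even // dmulE; congr pair.
case: f Hgh => Hgh; [apply: (DEkey (f:=true) He F _ Hgh) | apply: (DEkey (f:=false) He F _ Hgh)]; by rewrite Hpsi3 ?zmK.
Qed.

Lemma P1 : Pn 1.
Proof.
split => //.
- move=> [[f u] v] [[f' u'] v'] _ _; rewrite /Delta /dmul /=; congr pair.
  by rewrite /zm /md /= expr0 modz1.
Qed.

Lemma P2 : Pn 2.
Proof.
split => //.
- move=> [[f a] b] [[f' c] d] /= E1 E2; subst; by case: f.
- move=> [[f a] b] /= E1; subst; by case: f.
- move=> [[f [[fa []] []]] b] [[f' [[fc []] []]] d] /= E1 E2; subst.
  by case: f; case: fa; case: fc; vm_compute.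
- move=> [[f [[fa []] []]] b] [[f' [[fc []] []]] d] /= E1 E2; subst.
  by case: f; case: f'; case: fa; case: fc; vm_compute.
Qed.

Lemma allP m : Pn m.+1 /\ Pn m.+2.
Proof.
elim: m => [|m [IH1 IH2]]; first by split; [exact: P1 | exact: P2].
split => //.
case: (boolP (odd m.+3)) => Ho; first exact: step_odd.
case: m IH1 IH2 Ho => [|m] IH1 IH2 Ho; first by [].
exact: step_even.
Qed.
End Main.

Theorem theorem1 (p q : nat) :
  (0 < p)%N -> (0 < q)%N -> odd (p + q) ->
  forall n : nat, (1 <= n)%N ->
  [/\ (* (a) J_n is a subgroup of Aut(T_{n+1}) *)
      J p q (aone n)
      /\ (forall g h : A n, J p q g -> J p q h ->
            J p q (amul g h) /\ J p q (ainv g)),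
      (* (b) psi_n is a homomorphism to Z_{2^{floor(n/2)}} *)
      (forall g h : A n, J p q g -> J p q h ->
         psi p q (amul g h) = zm n (psi p q g + psi p q h))
    & (* (c) Delta_n is a homomorphism to D_{2^{floor(n/2)+1}} *)
      (forall g h : A n, J p q g -> J p q h ->
         Delta p q (amul g h) = dmul n (Delta p q g) (Delta p q h))].
Proof.
move=> _ _ Hodd n Hn.
have Hs : odd (absz (Posz p + Posz q)) by rewrite -PoszD.
case: n Hn => // n _.
have [[J1 Jm Ji Hpsi HD] _] := allP Hs n.
split => //; split => // g h Jg Jh; split; [exact: Jm | exact: Ji].
Qed.
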